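(* Let $\mathcal{A}$ be a unital commutative C*-algebra and $d,n\in\mathbb{N}$. Let $\{\tau_j\}_{j=1}^n$ and $\{\omega_j\}_{j=1}^n$ be two Parseval frames for the Hilbert C*-module $\mathcal{A}^d$, and let $\varepsilon>0$. If \[ \left\|\sum_{j=1}^{n}\langle \tau_j-\omega_j, \tau_j-\omega_j\rangle \right\|<\varepsilon, \] then \[ \left\|\sum_{j=1}^{n}\langle \theta_\tau\tau_j-\theta_\omega\omega_j, \theta_\tau\tau_j-\theta_\omega \omega_j\rangle \right\|<4\varepsilon, \] where the inner product on the left is that of $\mathcal{A}^n$.
   Context: For a unital C*-algebra $\mathcal{A}$ and $m\in\mathbb{N}$, $\mathcal{A}^m$ is the left $\mathcal{A}$-module with the natural operations and $\mathcal{A}$-valued inner product $\langle (x_j)_{j=1}^m,(y_j)_{j=1}^m\rangle=\sum_{j=1}^m x_jy_j^*$, with norm $\|x\|=\|\langle x,x\rangle\|^{1/2}$; $\{e_k\}$ denotes its standard orthonormal basis. A collection $\{\tau_j\}_{j=1}^n$ in $\mathcal{A}^d$ is a Parseval frame for $\mathcal{A}^d$ if $\langle x,x\rangle=\sum_{j=1}^n\langle x,\tau_j\rangle\langle\tau_j,x\rangle$ for all $x\in\mathcal{A}^d$. Its analysis homomorphism is $\theta_\tau:\mathcal{A}^d\to\mathcal{A}^n$, $\theta_\tau x=(\langle x,\tau_j\rangle)_{j=1}^n$; similarly for $\theta_\omega$. *)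

(* Defs.v *)
From mathcomp Require Import all_boot all_algebra complex reals.
Set Implicit Arguments. Unset Strict Implicit. Unset Printing Implicit Defensive.
Import GRing.Theory Num.Theory.
Local Open Scope ring_scope.
Local Open Scope complex_scope.

Record is_comm_cstar (R : realType) (A : comAlgType R[i])
    (star : A -> A) (nrm : A -> R) : Prop := {
  cs_nrm_ge0 : forall x, 0 <= nrm x;
  cs_nrm_eq0 : forall x, nrm x = 0 -> x = 0;
  cs_nrm_triangle : forall x y, nrm (x + y) <= nrm x + nrm y;
  cs_nrm_scale : forall (c : R[i]) x, (nrm (c *: x))%:C = `|c| * (nrm x)%:C;
  cs_nrm_submult : forall x y, nrm (x * y) <= nrm x * nrm y;
  cs_complete : forall u : nat -> A,
      (forall e : R, 0 < e -> exists N, forall m k, (N <= m)%N -> (N <= k)%N ->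
          nrm (u m - u k) < e) ->
      exists l : A, forall e : R, 0 < e -> exists N, forall m, (N <= m)%N ->
          nrm (u m - l) < e;
  cs_star_add : forall x y, star (x + y) = star x + star y;
  cs_star_scale : forall (c : R[i]) x, star (c *: x) = (Num.conj c) *: star x;
  cs_star_mul : forall x y, star (x * y) = star y * star x;
  cs_star_invol : forall x, star (star x) = x;
  cs_cstar_id : forall x, nrm (star x * x) = nrm x ^+ 2
}.

Definition cip (R : realType) (A : comAlgType R[i]) (star : A -> A) (m : nat)
    (x y : 'rV[A]_m) : A :=
  \sum_(k < m) x ord0 k * star (y ord0 k).

Definition parseval (R : realType) (A : comAlgType R[i]) (star : A -> A)
    (d n : nat) (tau : 'I_n -> 'rV[A]_d) : Prop :=
  forall x : 'rV[A]_d,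
    cip star x x = \sum_(j < n) cip star x (tau j) * cip star (tau j) x.

Definition analysis_op (R : realType) (A : comAlgType R[i]) (star : A -> A)
    (d n : nat) (tau : 'I_n -> 'rV[A]_d) (x : 'rV[A]_d) : 'rV[A]_n :=
  \row_(j < n) cip star x (tau j).

(* Main.v *)
Require Import Defs.
From mathcomp Require Import all_boot all_order all_algebra complex reals.
From mathcomp Require Import ring lra.
Import Order.TTheory GRing.Theory Num.Theory.
Local Open Scope ring_scope.
Local Open Scope complex_scope.

Lemma bernoulli (R : realType) (d : R) (n : nat) : 0 <= d -> 1 + n%:R * d <= (1 + d) ^+ n.
Proof.
move=> hd; elim: n => [|n IH]; first by rewrite mul0r addr0 expr0.
rewrite exprS -addn1 natrD.
have h1 : 0 <= n%:R * d by rewrite mulr_ge0 // ler0n.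
nra.
Qed.

Lemma geom_small (R : realType) (q e : R) : 0 <= q -> q < 1 -> 0 < e ->
  exists N : nat, q ^+ N < e.
Proof.
move=> q0 q1 e0.
have [->|qn0] := eqVneq q 0; first by exists 1%N; rewrite expr1.
have qp : 0 < q by rewrite lt_def qn0 q0.
set p := q^-1.
have p1 : 1 < p by rewrite /p invf_gt1.
set K := e^-1 / (p - 1).
have K0 : 0 <= K by rewrite /K divr_ge0 // ?invr_ge0 ?subr_ge0 ltW.
exists (Num.bound K).
have hN := archi_boundP K0.
set N := Num.bound K in hN *.
have pm1 : 0 < p - 1 by rewrite subr_gt0.
have hb := @bernoulli R (p - 1) N (ltW pm1).
rewrite [1 + (p - 1)]addrC subrK in hb.
have qp1 : q ^+ N * p ^+ N = 1 by rewrite -exprMn /p mulfV // expr1n.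
have hK : e^-1 < N%:R * (p - 1).
  by rewrite -ltr_pdivrMr ?subr_gt0.
have qN0 : 0 <= q ^+ N by rewrite exprn_ge0.
have h2 : q ^+ N * e^-1 < 1.
  move: qp1 hb hK qN0; set a := q ^+ N; set b := p ^+ N; set c := N%:R * (p - 1).
  move=> qp1 hb hK qN0.
  have : a * e^-1 <= a * c by rewrite ler_wpM2l // ltW.
  have : a * (1 + c) <= a * b by rewrite ler_wpM2l.
  have [->|ap] := eqVneq a 0; first by move=> _ _; rewrite mul0r ltr01.
  have a0 : 0 < a by rewrite lt_def ap qN0.
  nra.
have ie : e^-1 * e = 1 by rewrite mulVf // gt_eqF.
nra.
Qed.

Lemma small_le0 (R : realType) (a C : R) : 0 <= C -> (forall e, 0 < e -> a <= C * e) -> a <= 0.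
Proof.
move=> C0 H; rewrite leNgt; apply/negP => a0.
have e0 : 0 < a / (C + 1) by rewrite divr_gt0 // ltr_wpDl.
have := H _ e0. rewrite mulrA ler_pdivlMr ?ltr_wpDl //. nra.
Qed.

Section CS.
Variables (R : realType) (A : comAlgType R[i]) (star : A -> A) (nrm : A -> R).
Hypothesis HA : is_comm_cstar star nrm.

Lemma normC_real (r : R) : `|r%:C| = (`|r|)%:C.
Proof. by rewrite normc_def /= expr0n /= addr0 sqrtr_sqr. Qed.

Lemma realC_inj (a b : R) : a%:C = b%:C -> a = b.
Proof. by case. Qed.

Lemma nrm_rs (r : R) x : nrm (r%:C *: x) = `|r| * nrm x.
Proof. apply: realC_inj. by rewrite (cs_nrm_scale HA) normC_real rmorphM. Qed.

Lemma nrm_i x : nrm ('i *: x) = nrm x.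
Proof. apply: realC_inj. by rewrite (cs_nrm_scale HA) normCi mul1r. Qed.

Lemma star0 : star 0 = 0.
Proof. have := cs_star_add HA 0 0. rewrite addr0 => /eqP. by rewrite -subr_eq subrr eq_sym => /eqP. Qed.

Lemma starN x : star (- x) = - star x.
Proof. apply/eqP; rewrite -addr_eq0 -(cs_star_add HA) addNr. by rewrite star0. Qed.

Lemma starD x y : star (x + y) = star x + star y.
Proof. exact: (cs_star_add HA). Qed.

Lemma starB x y : star (x - y) = star x - star y.
Proof. by rewrite starD starN. Qed.

Lemma starK x : star (star x) = x.
Proof. exact: (cs_star_invol HA). Qed.

Lemma starM x y : star (x * y) = star x * star y.
Proof. by rewrite (cs_star_mul HA) mulrC. Qed.

Lemma star_sum (I : Type) (r : seq I) (P : pred I) (F : I -> A) :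
  star (\sum_(i <- r | P i) F i) = \sum_(i <- r | P i) star (F i).
Proof. exact: (big_morph star starD star0). Qed.

Lemma star1 : star 1 = 1.
Proof.
have := (cs_star_mul HA) (star 1) 1. rewrite !mulr1 !starK mulr1 => H.
by rewrite -H.
Qed.

Lemma star_rs (r : R) x : star (r%:C *: x) = r%:C *: star x.
Proof. rewrite (cs_star_scale HA). congr (_ *: _). by rewrite /Num.conj /= oppr0. Qed.

Lemma star_i x : star ('i *: x) = - ('i *: star x).
Proof. by rewrite (cs_star_scale HA) conjCi scaleNr. Qed.

Lemma nrm_ge0 x : 0 <= nrm x.
Proof. exact: (cs_nrm_ge0 HA). Qed.

Lemma nrm0 : nrm 0 = 0.
Proof. by rewrite -(scale0r (0:A)) -[0 : R[i]]/((0:R)%:C) nrm_rs normr0 mul0r. Qed.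

Lemma nrmN x : nrm (- x) = nrm x.
Proof.
rewrite -scaleN1r. have -> : (-1 : R[i]) = (-1:R)%:C by rewrite rmorphN1.
by rewrite nrm_rs normrN normr1 mul1r.
Qed.

Lemma nrmD x y : nrm (x + y) <= nrm x + nrm y.
Proof. exact: (cs_nrm_triangle HA). Qed.

Lemma nrmB x y : nrm (x - y) <= nrm x + nrm y.
Proof. by rewrite -(nrmN y) nrmD. Qed.

Lemma nrmM x y : nrm (x * y) <= nrm x * nrm y.
Proof. exact: (cs_nrm_submult HA). Qed.

Lemma nrm_eq0 x : nrm x = 0 -> x = 0.
Proof. exact: (cs_nrm_eq0 HA). Qed.

Lemma nrm_star_le x : nrm x <= nrm (star x).
Proof.
have h := (cs_cstar_id HA) x.
have := nrmM (star x) x. rewrite h expr2.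
have [->|hx] := eqVneq (nrm x) 0; first by rewrite nrm_ge0.
have hx' : 0 < nrm x by rewrite lt_def hx nrm_ge0.
by rewrite (ler_pM2r hx').
Qed.

Lemma nrm_star x : nrm (star x) = nrm x.
Proof. apply/eqP; rewrite eq_le nrm_star_le andbT -{2}(starK x). exact: nrm_star_le. Qed.

Lemma cstar x : nrm (x * star x) = nrm x ^+ 2.
Proof. by rewrite mulrC (cs_cstar_id HA). Qed.

Lemma cstar_h h : star h = h -> nrm (h * h) = nrm h ^+ 2.
Proof. by move=> Hh; rewrite -{2}Hh cstar. Qed.

Lemma nrm1 : nrm 1 = 1.
Proof.
have := cstar 1. rewrite star1 mulr1 expr2 => /eqP.
rewrite -subr_eq0 -{1}(mulr1 (nrm 1)) -mulrBr mulf_eq0 => /orP [/eqP H|].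
- have := @nrm_eq0 1 H => /eqP; by rewrite oner_eq0.
- by rewrite subr_eq0 eq_sym => /eqP.
Qed.


Lemma nrm_double x : nrm (x + x) = 2 * nrm x.
Proof.
have -> : x + x = (2:R)%:C *: x by rewrite rmorph_nat scaler_nat mulr2n.
by rewrite nrm_rs ger0_norm.
Qed.

Lemma pair_trick h k : star h = h -> star k = k ->
  nrm h ^+ 2 <= nrm (h * h + k * k).
Proof.
move=> Hh Hk.
set z := h + 'i *: k.
have sz : star z = h - 'i *: k by rewrite /z starD star_i Hh Hk.
have zz : z * star z = h * h + k * k.
  rewrite sz /z mulrDl !mulrBr -!scalerAl -!scalerAr scalerA mulCii scaleN1r.
  rewrite [k * h]mulrC. set w := 'i *: (h * k). by rewrite opprK addrA subrK.
have hh : h + h = z + star z by rewrite sz /z addrACA subrr addr0.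
have le1 : nrm h <= nrm z.
  have := nrmD z (star z). rewrite -hh nrm_double nrm_star. lra.
rewrite -zz cstar. apply: lerXn2r => //; rewrite nnegrE nrm_ge0 //.
Qed.


Definition half (x : A) : A := (2^-1 : R)%:C *: x.

Lemma nrm_half x : nrm (half x) = nrm x / 2.
Proof. by rewrite /half nrm_rs ger0_norm ?invr_ge0 ?ler0n // mulrC. Qed.

Lemma star_half x : star (half x) = half (star x).
Proof. exact: star_rs. Qed.

Lemma half_twice x : half x + half x = x.
Proof.
rewrite /half -scalerDl -rmorphD.
have -> : (2^-1 + 2^-1 : R) = 1 by field.
by rewrite rmorph1 scale1r.
Qed.

Lemma halfB x y : half x - half y = half (x - y).
Proof. by rewrite /half scalerBr. Qed.

Fixpoint yseq (u : A) (k : nat) : A :=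
  if k is k'.+1 then half (u + yseq u k' * yseq u k') else 0.

Lemma sqrt_near1 u : star u = u -> nrm u < 1 ->
  exists r, star r = r /\ r * r = 1 - u.
Proof.
move=> Hu q1.
set q := nrm u in q1. have q0 : 0 <= q := nrm_ge0 u.
set y := yseq u.
have yS k : y k.+1 = half (u + y k * y k) by [].
have yb k : nrm (y k) <= q.
  elim: k => [|k IH]; first by rewrite /y /= nrm0.
  rewrite yS nrm_half.
  have h1 := nrmD u (y k * y k). rewrite -/q in h1. have h2 := nrmM (y k) (y k).
  have h3 := nrm_ge0 (y k).
  have h4 : nrm (y k) * nrm (y k) <= q * q by rewrite ler_pM.
  have qq : q * q <= q by nra.
  lra.
have ys k : star (y k) = y k.
  elim: k => [|k IH]; first exact: star0.
  by rewrite yS star_half starD starM IH Hu.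
have yd k : nrm (y k.+1 - y k) <= q ^+ k.+1.
  elim: k => [|k IH].
    rewrite /y /= mulr0 addr0 subr0 nrm_half expr1 -/q. lra.
  rewrite (yS k.+1) (yS k) halfB.
  have -> : u + y k.+1 * y k.+1 - (u + y k * y k) = (y k.+1 + y k) * (y k.+1 - y k) by ring.
  rewrite nrm_half.
  have h1 := nrmM (y k.+1 + y k) (y k.+1 - y k).
  have h2 := nrmD (y k.+1) (y k).
  have h3 := yb k.+1. have h4 := yb k.
  have h5 := nrm_ge0 (y k.+1 - y k).
  have h6 : nrm (y k.+1 + y k) * nrm (y k.+1 - y k) <= (q + q) * q ^+ k.+1.
    by apply: ler_pM; rewrite ?nrm_ge0 //; lra.
  rewrite [q ^+ k.+2]exprS. lra.
have yc k j : (1 - q) * nrm (y (k + j)%N - y k) <= q ^+ k.+1 - q ^+ (k + j).+1.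
  elim: j => [|j IH]; first by rewrite addn0 !subrr nrm0 mulr0.
  have -> : y (k + j.+1)%N - y k = (y (k + j).+1 - y (k + j)%N) + (y (k + j)%N - y k).
    by rewrite addnS addrA subrK.
  have h1 := nrmD (y (k + j).+1 - y (k + j)%N) (y (k + j)%N - y k).
  have h2 := yd (k + j)%N.
  have h3 : 0 <= 1 - q by lra.
  have h4 := ler_wpM2l h3 h1.
  rewrite addnS [q ^+ (k + j).+2]exprS. nra.
have Cy : forall e : R, 0 < e -> exists N, forall m k, (N <= m)%N -> (N <= k)%N ->
    nrm (y m - y k) < e.
  move=> e e0.
  have e1 : 0 < e * (1 - q) / 2 by rewrite divr_gt0 // mulr_gt0 // subr_gt0.
  have [N hN] := @geom_small R _ _ q0 q1 e1.
  exists N => m k hm hk.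
  have bnd j : nrm (y (N + j)%N - y N) < e / 2.
    have := yc N j. have := nrm_ge0 (y (N + j)%N - y N).
    have : 0 <= q ^+ (N + j).+1 by rewrite exprn_ge0.
    have : q ^+ N.+1 <= q ^+ N by rewrite exprS ler_piMl ?exprn_ge0 // ltW.
    move=> a b c d.
    have qp : 0 < 1 - q by lra.
    have : (1 - q) * nrm (y (N + j)%N - y N) < (1 - q) * (e / 2) by lra.
    by rewrite ltr_pM2l.
  have -> : y m - y k = (y (N + (m - N))%N - y N) - (y (N + (k - N))%N - y N).
    by rewrite !subnKC // opprB addrA subrK.
  have := nrmB (y (N + (m - N))%N - y N) (y (N + (k - N))%N - y N).
  have := bnd (m - N)%N. have := bnd (k - N)%N. lra.
have [l hl] := cs_complete HA Cy.
have fixl : l = half (u + l * l).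
  apply/eqP; rewrite -subr_eq0; apply/eqP; apply: nrm_eq0.
  apply/eqP; rewrite eq_le nrm_ge0 andbT.
  apply: (@small_le0 R _ (1 + (q + nrm l) / 2)).
    by rewrite addr_ge0 // divr_ge0 // addr_ge0 // nrm_ge0.
  move=> e e0. have [N hN] := hl e e0.
  have -> : l - half (u + l * l) = - (y N.+1 - l) + half ((y N + l) * (y N - l)).
    have e1 : half ((y N + l) * (y N - l)) = y N.+1 - half (u + l * l).
      by rewrite yS halfB; congr half; ring.
    rewrite e1; ring.
  have h1 := nrmD (- (y N.+1 - l)) (half ((y N + l) * (y N - l))).
  rewrite nrmN nrm_half in h1.
  have h2 := nrmM (y N + l) (y N - l).
  have h3 := nrmD (y N) l. have h4 := yb N.
  have h5 := hN N.+1 (leqnSn N). have h6 := hN N (leqnn N).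
  have h7 : nrm (y N + l) * nrm (y N - l) <= (q + nrm l) * e.
    by apply: ler_pM; rewrite ?nrm_ge0 //; lra.
  have := nrm_ge0 l. nra.
have sl : star l = l.
  apply/eqP; rewrite -subr_eq0; apply/eqP; apply: nrm_eq0.
  apply/eqP; rewrite eq_le nrm_ge0 andbT.
  apply: (@small_le0 R _ 2) => // e e0. have [N hN] := hl e e0.
  have -> : star l - l = star (l - y N) + (y N - l) by rewrite starB ys addrA subrK.
  have h1 := nrmD (star (l - y N)) (y N - l).
  rewrite nrm_star in h1.
  have h2 : nrm (l - y N) = nrm (y N - l) by rewrite -opprB nrmN.
  have := hN N (leqnn N). lra.
exists (1 - l); split; first by rewrite starB star1 sl.
have ll : l + l = u + l * l by rewrite {1 2}fixl half_twice.
have -> : u = l + l - l * l by rewrite ll addrK.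
ring.
Qed.

Lemma zz_decomp (h k : A) : (h + ('i : R[i]) *: k) * (h - ('i : R[i]) *: k) = h * h + k * k.
Proof.
rewrite mulrDl !mulrBr -!scalerAl -!scalerAr scalerA mulCii scaleN1r.
rewrite [k * h]mulrC. set w := 'i *: (h * k). by rewrite opprK addrA subrK.
Qed.

Lemma single_sq k : star k = k -> nrm k < 1 -> nrm (1 - k * k) <= 1.
Proof.
move=> Hk k1.
have su : star (k * k) = k * k by rewrite starM Hk.
have nu : nrm (k * k) < 1.
  have := nrmM k k. have := nrm_ge0 k. nra.
have [g [sg gg]] := sqrt_near1 _ su nu.
have := pair_trick _ _ sg Hk. rewrite gg subrK nrm1 -(cstar_h _ sg) gg //.
Qed.

Lemma posz z : nrm z < 1 -> nrm (1 - z * star z) <= 1.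
Proof.
move=> z1.
set h := half (z + star z).
set k := - ('i *: half (z - star z)).
have sh : star h = h by rewrite /h star_half starD starK addrC.
have ik : 'i *: k = half (z - star z).
  by rewrite /k scalerN scalerA mulCii scaleN1r opprK.
have sk : star k = k.
  rewrite /k starN star_i opprK star_half starB starK.
  by rewrite -opprB /half !scalerN.
have zd : z = h + 'i *: k.
  rewrite ik /h /half -scalerDr.
  have -> : z + star z + (z - star z) = z + z by ring.
  by rewrite scalerDr; exact: (esym (half_twice z)).
have zs : star z = h - 'i *: k by rewrite {1}zd starD sh star_i sk.
have zz : z * star z = h * h + k * k by rewrite {1}zs {1}zd zz_decomp.
have nk : nrm k < 1.
  rewrite /k nrmN nrm_i nrm_half.
  have := nrmB z (star z). rewrite nrm_star. lra.
have n1 := single_sq _ sk nk.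
have su : star (z * star z) = z * star z by rewrite starM starK mulrC.
have nu : nrm (z * star z) < 1.
  rewrite cstar. have := nrm_ge0 z. nra.
have [r [sr rr]] := sqrt_near1 _ su nu.
have E : r * r + h * h = 1 - k * k by rewrite rr zz; ring.
have := pair_trick _ _ sr sh. rewrite E => H.
rewrite -rr (cstar_h _ sr). lra.
Qed.

Lemma nrm_one_sc (d : R) : 0 <= d -> nrm (d%:C *: 1) = d.
Proof. by move=> d0; rewrite nrm_rs nrm1 mulr1 ger0_norm. Qed.

Lemma sq_zz z (d : R) : 0 < d ->
  exists w, star w = w /\ w * w = z * star z + d%:C *: 1.
Proof.
move=> d0.
set c := nrm z. have c0 : 0 <= c := nrm_ge0 z.
set s := c + 1. have s0 : 0 < s by rewrite /s ltr_wpDl.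
set mu := s ^+ 2. set la := mu + d.
have mu0 : 0 < mu by rewrite /mu exprn_gt0.
have la0 : 0 < la by rewrite /la addr_gt0.
set z' := (s^-1)%:C *: z.
have nz' : nrm z' < 1.
  rewrite /z' nrm_rs ger0_norm ?invr_ge0 ?ltW // -/c.
  rewrite mulrC ltr_pdivrMr //. rewrite /s mul1r. lra.
have p1 := posz _ nz'.
have e1 : mu%:C *: 1 - z * star z = mu%:C *: (1 - z' * star z').
  rewrite /z' star_rs -scalerAl -scalerAr scalerA -rmorphM scalerBr scalerA -rmorphM.
  congr (_ - _). rewrite /mu expr2 mulrA mulfK ?gt_eqF // mulfV ?gt_eqF // rmorph1 scale1r //.
set u := (la^-1)%:C *: (mu%:C *: 1 - z * star z).
have su : star u = u.
  by rewrite /u star_rs starB star_rs star1 starM starK mulrC.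
have nu : nrm u < 1.
  rewrite /u e1 !nrm_rs !ger0_norm ?invr_ge0 ?ltW //.
  have h1 := nrm_ge0 (1 - z' * star z').
  rewrite mulrC ltr_pdivrMr // mul1r /la.
  nra.
have [g [sg gg]] := sqrt_near1 _ su nu.
exists ((Num.sqrt la)%:C *: g); split.
  by rewrite star_rs sg.
rewrite -scalerAl -scalerAr scalerA -rmorphM -expr2 sqr_sqrtr ?ltW // gg.
rewrite /u scalerBr scalerA -rmorphM mulfV ?gt_eqF // rmorph1 scale1r.
rewrite /la rmorphD scalerDl; ring.
Qed.

Definition Pos (a : A) := forall d : R, 0 < d ->
  exists w, star w = w /\ w * w = a + d%:C *: 1.

Lemma Pos_zz z : Pos (z * star z).
Proof. move=> d d0; exact: sq_zz. Qed.

Lemma Pos0 : Pos 0.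
Proof. have := Pos_zz 0. by rewrite mul0r. Qed.

Lemma Pos_add a b : Pos a -> Pos b -> Pos (a + b).
Proof.
move=> Pa Pb d d0.
have d3 : 0 < d / 3 by rewrite divr_gt0.
have [r [sr rr]] := Pa _ d3. have [q [sq qq]] := Pb _ d3.
set z := r + ('i : R[i]) *: q.
have zs : star z = r - ('i : R[i]) *: q by rewrite /z starD star_i sr sq.
have [w [sw ww]] := sq_zz z (d / 3) d3.
exists w; split => //.
rewrite ww zs /z zz_decomp rr qq.
have E3 : d = d / 3 + d / 3 + d / 3 by lra.
have E : d%:C *: (1:A) = (d/3)%:C *: 1 + (d/3)%:C *: 1 + (d/3)%:C *: 1.
  by rewrite -!scalerDl -!rmorphD -E3.
rewrite E. ring.
Qed.

Lemma Pos_sum (n : nat) (F : 'I_n -> A) :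
  (forall i, Pos (F i)) -> Pos (\sum_(i < n) F i).
Proof.
move=> H. apply: big_ind => //; [exact: Pos0 | exact: Pos_add].
Qed.

Lemma mono a b : Pos a -> Pos b -> nrm a <= nrm (a + b).
Proof.
move=> Pa Pb.
rewrite -subr_le0.
apply: (@small_le0 R _ 3) => // d d0.
have [r [sr rr]] := Pa _ d0. have [q [sq qq]] := Pb _ d0.
have := pair_trick _ _ sr sq.
rewrite -(cstar_h _ sr) rr qq.
have E : a + d%:C *: 1 + (b + d%:C *: 1) = (a + b) + (d + d)%:C *: 1.
  by rewrite rmorphD scalerDl; ring.
rewrite E => H.
have h1 := nrmD (a + b) ((d + d)%:C *: 1).
have h2 := nrmB (a + d%:C *: 1) (d%:C *: 1).
rewrite addrK in h2.
have n1 : nrm ((d + d)%:C *: (1:A)) = d + d by apply: nrm_one_sc; lra.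
have n2 : nrm (d%:C *: (1:A)) = d by apply: nrm_one_sc; lra.
lra.
Qed.

Lemma cip_star m (x y : 'rV[A]_m) : star (cip star x y) = cip star y x.
Proof. rewrite /cip star_sum; apply: eq_bigr => k _; by rewrite starM starK mulrC. Qed.

Lemma cipBl m (x y z : 'rV[A]_m) : cip star (x - y) z = cip star x z - cip star y z.
Proof. rewrite /cip -sumrB; apply: eq_bigr => k _; by rewrite !mxE mulrBl. Qed.

Lemma cipBr m (x y z : 'rV[A]_m) : cip star x (y - z) = cip star x y - cip star x z.
Proof. rewrite /cip -sumrB; apply: eq_bigr => k _; by rewrite !mxE starB mulrBr. Qed.

Lemma main_core (d n : nat) (tau omega : 'I_n -> 'rV[A]_d)
    (Htau : parseval star tau) (Homega : parseval star omega) :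
  nrm (\sum_(j < n)
         cip star (analysis_op star tau (tau j) - analysis_op star omega (omega j))
                  (analysis_op star tau (tau j) - analysis_op star omega (omega j)))
  <= 4 * nrm (\sum_(j < n) cip star (tau j - omega j) (tau j - omega j)).
Proof.
set D := fun j => tau j - omega j.
set Y := fun j k => cip star (D j) (tau k).
set Z := fun j k => cip star (omega j) (D k).
set H := \sum_(j < n) cip star (D j) (D j).
have ET : \sum_(j < n)
         cip star (analysis_op star tau (tau j) - analysis_op star omega (omega j))
                  (analysis_op star tau (tau j) - analysis_op star omega (omega j))
   = \sum_(j < n) \sum_(k < n) (Y j k + Z j k) * star (Y j k + Z j k).
  apply: eq_bigr => j _; rewrite /cip; apply: eq_bigr => k _.
  have -> : (analysis_op star tau (tau j) - analysis_op star omega (omega j)) ord0 k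
     = Y j k + Z j k.
    rewrite !mxE /Y /Z /D cipBl cipBr. ring.
  by [].
rewrite ET.
set T := \sum_(j < n) \sum_(k < n) (Y j k + Z j k) * star (Y j k + Z j k).
set P := \sum_(j < n) \sum_(k < n) (Y j k - Z j k) * star (Y j k - Z j k).
have PT : Pos T by apply: Pos_sum => j; apply: Pos_sum => k; exact: Pos_zz.
have PP : Pos P by apply: Pos_sum => j; apply: Pos_sum => k; exact: Pos_zz.
have HY : \sum_(j < n) \sum_(k < n) Y j k * star (Y j k) = H.
  apply: eq_bigr => j _. rewrite (Htau (D j)). apply: eq_bigr => k _.
  by rewrite /Y cip_star.
have HZ : \sum_(j < n) \sum_(k < n) Z j k * star (Z j k) = H.
  rewrite exchange_big /=. apply: eq_bigr => k _. rewrite (Homega (D k)).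
  apply: eq_bigr => j _. by rewrite /Z cip_star mulrC.
have TP : T + P = H + H + H + H.
  rewrite /T /P -big_split /=.
  rewrite (eq_bigr (fun j => (\sum_(k < n) Y j k * star (Y j k) + \sum_(k < n) Y j k * star (Y j k))
     + (\sum_(k < n) Z j k * star (Z j k) + \sum_(k < n) Z j k * star (Z j k)))); last first.
    move=> j _. rewrite -!big_split /=. apply: eq_bigr => k _.
    rewrite starD starB. ring.
  rewrite !big_split /= HY HZ. ring.
have := mono _ _ PT PP. rewrite TP.
have := nrmD (H + H + H) H. have := nrmD (H + H) H. have := nrmD H H.
lra.
Qed.

End CS.

Theorem mainTheorem1 (R : realType) (A : comAlgType R[i])
    (star : A -> A) (nrm : A -> R) (HA : is_comm_cstar star nrm)
    (d n : nat) (tau omega : 'I_n -> 'rV[A]_d)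
    (Htau : parseval star tau) (Homega : parseval star omega)
    (eps : R) (Heps : 0 < eps) :
  nrm (\sum_(j < n) cip star (tau j - omega j) (tau j - omega j)) < eps ->
  nrm (\sum_(j < n)
         cip star (analysis_op star tau (tau j) - analysis_op star omega (omega j))
                  (analysis_op star tau (tau j) - analysis_op star omega (omega j)))
    < 4 * eps.
Proof.
move=> Hlt.
have := @main_core R A star nrm HA d n tau omega Htau Homega.
lra.
Qed.
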